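(* Let $\triangle ABC$ have side lengths $a=|BC|>b=|CA|>c=|AB|$ and angles $\alpha=\angle A$, $\beta=\angle B$, $\gamma=\angle C$. For $x\in\{a,b,c\}$ let $W_x$ denote the largest area of an equilateral triangle contained in the closed triangle $\triangle ABC$ having one of its sides lying on side $x$. (i) If $60^\circ<\beta<80^\circ<\alpha<90^\circ$, $\alpha/2+\beta<120^\circ$ and $\alpha+\beta/2\ge 120^\circ$, then the minimum of $W_a,W_b,W_c$ is attained on the middle side $b$, and the maximum is attained on both the short side $c$ and the long side $a$ when $\alpha+\beta/2=120^\circ$, and on the long side $a$ when $\alpha+\beta/2>120^\circ$. (ii) If $75^\circ<\beta<90^\circ$, $80^\circ<\alpha<90^\circ$ and $\alpha/2+\beta\ge 120^\circ$, then the maximum of $W_a,W_b,W_c$ is attained on the long side $a$, and the minimum is attained on the short side $c$ when $\alpha/2+\beta>120^\circ$, and on both the short side $c$ and the middle side $b$ when $\alpha/2+\beta=120^\circ$.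
   Context: An equilateral triangle of largest area contained in $\triangle ABC$ with one side lying on a given side of $\triangle ABC$ is called the wedged equilateral triangle (WET) on that side; it need not have all three vertices on the boundary of $\triangle ABC$. The max (resp. min) WET is the one of largest (resp. smallest) area among the three sides. *)

(* Defs.v *)
From Stdlib Require Import Reals Lra.
Open Scope R_scope.

Definition pt := (R * R)%type.

Definition pdist (P Q : pt) : R :=
  sqrt ((fst P - fst Q) ^ 2 + (snd P - snd Q) ^ 2).

Definition angle (V P Q : pt) : R :=
  acos (((fst P - fst V) * (fst Q - fst V) + (snd P - snd V) * (snd Q - snd V))
        / (pdist V P * pdist V Q)).

Definition nondegenerate (A B C : pt) : Prop :=
  (fst B - fst A) * (snd C - snd A) - (snd B - snd A) * (fst C - fst A) <> 0.

Definition in_triangle (A B C X : pt) : Prop :=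
  exists u v w : R, 0 <= u /\ 0 <= v /\ 0 <= w /\ u + v + w = 1 /\
    fst X = u * fst A + v * fst B + w * fst C /\
    snd X = u * snd A + v * snd B + w * snd C.

Definition on_segment (P Q X : pt) : Prop :=
  exists t : R, 0 <= t <= 1 /\
    fst X = (1 - t) * fst P + t * fst Q /\ snd X = (1 - t) * snd P + t * snd Q.

Definition triangle_subset (P Q R0 A B C : pt) : Prop :=
  forall X, in_triangle P Q R0 X -> in_triangle A B C X.

Definition equilateral (P Q R0 : pt) : Prop :=
  0 < pdist P Q /\ pdist P Q = pdist Q R0 /\ pdist Q R0 = pdist R0 P.

Definition eq_area (s : R) : R := sqrt 3 / 4 * s ^ 2.

Definition wedged_area (A B C U V : pt) (w : R) : Prop :=
  exists P Q R0 : pt,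
    equilateral P Q R0 /\ on_segment U V P /\ on_segment U V Q /\
    triangle_subset P Q R0 A B C /\ w = eq_area (pdist P Q).

Definition is_WET_area (A B C U V : pt) (W : R) : Prop :=
  wedged_area A B C U V W /\ (forall w, wedged_area A B C U V w -> w <= W).

Definition deg (x : R) : R := x * PI / 180.

(* Main.v *)
Require Import Defs.
From Stdlib Require Import Reals Lra Psatz.
Open Scope R_scope.

Lemma sin_diff x y : sin x - sin y = 2 * cos ((x+y)/2) * sin ((x-y)/2).
Proof.
  set (m := (x+y)/2). set (h := (x-y)/2).
  assert (Ex : x = m + h) by (unfold m, h; field).
  assert (Ey : y = m - h) by (unfold m, h; field).
  rewrite Ex, Ey, sin_plus, sin_minus. ring.
Qed.

Lemma sin43 t : sin (4*PI/3 - t) = sin t / 2 - sqrt 3 / 2 * cos t.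
Proof.
  replace (4*PI/3) with (PI/3 + PI) by field.
  rewrite sin_minus, neg_sin, neg_cos, sin_PI3, cos_PI3. field.
Qed.

Lemma sinm23 t : sin (t - 2*PI/3) = - sin t / 2 - sqrt 3 / 2 * cos t.
Proof.
  replace (2*PI/3) with (PI - PI/3) by field.
  rewrite sin_minus, sin_PI_x, cos_minus, cos_PI, sin_PI, sin_PI3, cos_PI3. field.
Qed.

Lemma sinm13 t : sin (t - PI/3) = sin t / 2 - sqrt 3 / 2 * cos t.
Proof. rewrite sin_minus, sin_PI3, cos_PI3. field. Qed.

Lemma sin_pos_lt x : 0 < x < PI -> 0 < sin x.
Proof. intros [? ?]; apply sin_gt_0; lra. Qed.
Lemma cos_pos_lt x : - (PI/2) < x < PI/2 -> 0 < cos x.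
Proof. intros [? ?]; apply cos_gt_0; lra. Qed.

Lemma trig_i al be :
  deg 60 < be -> be < deg 80 -> deg 80 < al -> al < deg 90 ->
  al / 2 + be < deg 120 -> al + be / 2 >= deg 120 ->
  0 < sin (al - PI/3) /\ 0 < sin (be - PI/3) /\ 0 < sin (al + be - 2*PI/3) /\
  sin be < sin (4*PI/3 - (al + be)) /\ sin (4*PI/3 - (al + be)) <= sin al /\
  (al + be / 2 = deg 120 -> sin (4*PI/3 - (al + be)) = sin al) /\
  (al + be / 2 > deg 120 -> sin (4*PI/3 - (al + be)) < sin al).
Proof.
  unfold deg; intros; pose proof PI_RGT_0.
  assert (HH1: sin be < sin (4*PI/3 - (al + be))).
  { assert (0 < sin (4*PI/3 - (al + be)) - sin be); [|lra].
    rewrite sin_diff. apply Rmult_lt_0_compat; [apply Rmult_lt_0_compat; [lra|]|];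
    [apply cos_pos_lt | apply sin_pos_lt]; lra. }
  assert (HH2: 0 <= sin al - sin (4*PI/3 - (al + be)) /\
     (al + be / 2 = 120 * PI / 180 -> sin (4*PI/3 - (al + be)) = sin al) /\
     (al + be / 2 > 120 * PI / 180 -> sin (4*PI/3 - (al + be)) < sin al)).
  { assert (0 < cos ((al + (4 * PI / 3 - (al + be))) / 2)) by (apply cos_pos_lt; lra).
    split; [|split].
    - rewrite sin_diff. destruct (Req_dec (al + be/2) (120*PI/180)) as [E|E].
      + replace ((al - (4 * PI / 3 - (al + be))) / 2) with 0 by lra. rewrite sin_0. lra.
      + assert (0 < sin ((al - (4 * PI / 3 - (al + be))) / 2)) by (apply sin_pos_lt; lra). nra.
    - intro E. assert (sin al - sin (4 * PI / 3 - (al + be)) = 0); [|lra]. rewrite sin_diff. replace ((al - (4 * PI / 3 - (al + be))) / 2) with 0 by lra. rewrite sin_0. ring.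
    - intro E. assert (0 < sin al - sin (4 * PI / 3 - (al + be))); [|lra]. rewrite sin_diff. assert (0 < sin ((al - (4 * PI / 3 - (al + be))) / 2)) by (apply sin_pos_lt; lra). nra. }
  split; [apply sin_pos_lt; lra|]. split; [apply sin_pos_lt; lra|].
  split; [apply sin_pos_lt; lra|]. split; [exact HH1|]. lra.
Qed.

Lemma trig_ii al be :
  deg 75 < be -> be < deg 90 -> deg 80 < al -> al < deg 90 ->
  al / 2 + be >= deg 120 -> sin be < sin al ->
  0 < sin (al - PI/3) /\ 0 < sin (be - PI/3) /\ 0 < sin (al + be - 2*PI/3) /\
  sin (4*PI/3 - (al + be)) < sin al /\ sin (4*PI/3 - (al + be)) <= sin be /\
  (al / 2 + be = deg 120 -> sin (4*PI/3 - (al + be)) = sin be) /\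
  (al / 2 + be > deg 120 -> sin (4*PI/3 - (al + be)) < sin be).
Proof.
  unfold deg; intros; pose proof PI_RGT_0.
  assert (Hab : be < al).
  { destruct (Rlt_or_le be al) as [h|h]; [exact h|].
    assert (sin al - sin be <= 0); [|lra].
    rewrite sin_diff.
    assert (0 < cos ((al + be) / 2)) by (apply cos_pos_lt; lra).
    assert (0 <= sin ((be - al) / 2)) by (apply sin_ge_0; lra).
    replace ((al - be)/2) with (- ((be - al)/2)) by field. rewrite sin_neg. nra. }
  assert (HH1: sin (4*PI/3 - (al + be)) < sin al).
  { assert (0 < sin al - sin (4*PI/3 - (al + be))); [|lra].
    rewrite sin_diff. apply Rmult_lt_0_compat; [apply Rmult_lt_0_compat; [lra|]|];
    [apply cos_pos_lt | apply sin_pos_lt]; lra. }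
  assert (HH2: 0 <= sin be - sin (4*PI/3 - (al + be)) /\
     (al / 2 + be = 120 * PI / 180 -> sin (4*PI/3 - (al + be)) = sin be) /\
     (al / 2 + be > 120 * PI / 180 -> sin (4*PI/3 - (al + be)) < sin be)).
  { assert (0 < cos ((be + (4 * PI / 3 - (al + be))) / 2)) by (apply cos_pos_lt; lra).
    split; [|split].
    - rewrite sin_diff. destruct (Req_dec (al/2 + be) (120*PI/180)) as [E|E].
      + replace ((be - (4 * PI / 3 - (al + be))) / 2) with 0 by lra. rewrite sin_0. lra.
      + assert (0 < sin ((be - (4 * PI / 3 - (al + be))) / 2)) by (apply sin_pos_lt; lra). nra.
    - intro E. assert (sin be - sin (4 * PI / 3 - (al + be)) = 0); [|lra]. rewrite sin_diff. replace ((be - (4 * PI / 3 - (al + be))) / 2) with 0 by lra. rewrite sin_0. ring.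
    - intro E. assert (0 < sin be - sin (4 * PI / 3 - (al + be))); [|lra]. rewrite sin_diff. assert (0 < sin ((be - (4 * PI / 3 - (al + be))) / 2)) by (apply sin_pos_lt; lra). nra. }
  split; [apply sin_pos_lt; lra|]. split; [apply sin_pos_lt; lra|].
  split; [apply sin_pos_lt; lra|]. split; [exact HH1|]. lra.
Qed.

Definition dotp (U V W : pt) : R :=
  (fst V - fst U) * (fst W - fst U) + (snd V - snd U) * (snd W - snd U).
Definition crs (U V W : pt) : R :=
  (fst V - fst U) * (snd W - snd U) - (snd V - snd U) * (fst W - fst U).
Definition sopt (U V W : pt) : R :=
  2 * Rabs (crs U V W) * pdist U V /
  (Rmax (Rabs (crs U V W)) (sqrt 3 * dotp U V W) +
   Rmax (Rabs (crs U V W)) (sqrt 3 * dotp V U W)).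

Lemma sq_eq_nonneg x y : 0 <= x -> 0 <= y -> x * x = y * y -> x = y.
Proof. intros. nra. Qed.

Lemma s3sq : sqrt 3 * sqrt 3 = 3.
Proof. apply sqrt_sqrt; lra. Qed.
Lemma s3pos : 0 < sqrt 3.
Proof. apply sqrt_lt_R0; lra. Qed.

Lemma pdist_eq P Q : pdist P Q = sqrt ((fst P - fst Q) ^ 2 + (snd P - snd Q) ^ 2).
Proof. reflexivity. Qed.

Lemma sqr_nonneg2 a b : 0 <= a ^ 2 + b ^ 2.
Proof. nra. Qed.

Lemma pdist_sq_eq P Q R S : pdist P Q = pdist R S ->
  (fst P - fst Q) ^ 2 + (snd P - snd Q) ^ 2 = (fst R - fst S) ^ 2 + (snd R - snd S) ^ 2.
Proof. unfold pdist; intro H. apply sqrt_inj; auto using sqr_nonneg2. Qed.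

Lemma scalar_upper L2 dU F cr p q v w :
  cr <> 0 -> 0 < sqrt ((q-p)^2*L2) -> L2*F = dU^2+cr^2 ->
  0<=p<=1 -> 0<=q<=1 -> 0 <= 1-v-w -> 0<=v -> 0<=w ->
  (q-p)^2*L2 = (v-q)^2*L2 + 2*(v-q)*w*dU + w^2*F ->
  (v-q)^2*L2 + 2*(v-q)*w*dU + w^2*F = (v-p)^2*L2 + 2*(v-p)*w*dU + w^2*F ->
  sqrt ((q-p)^2*L2) <= 2 * Rabs cr * sqrt L2 /
  (Rmax (Rabs cr) (sqrt 3 * dU) + Rmax (Rabs cr) (sqrt 3 * (L2 - dU))).
Proof.
  intros Hcr Hpos Hlag Hp Hq H1 Hv Hw E1 E2.
  set (d := q - p) in *.
  assert (HX0 : 0 < d ^ 2 * L2).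
  { destruct (Rle_lt_dec (d^2*L2) 0) as [h|h]; [|exact h].
    rewrite (sqrt_neg_0 _ h) in Hpos. lra. }
  assert (Hd2' : 0 <= d^2) by nra.
  assert (Hd2 : 0 < d ^ 2) by (destruct Hd2'; [assumption| rewrite <- H in HX0; lra]).
  assert (HL2 : 0 < L2) by nra.
  assert (Hd : d <> 0) by (intro h; rewrite h in Hd2; lra).
  assert (Ea : (2*v - p - q) * L2 + 2 * w * dU = 0).
  { assert (h : (v-p)^2*L2 + 2*(v-p)*w*dU - ((v-q)^2*L2 + 2*(v-q)*w*dU)
            = d * ((2*v - p - q) * L2 + 2 * w * dU)) by (unfold d; ring).
    assert (h2 : d * ((2*v - p - q) * L2 + 2 * w * dU) = 0) by lra.
    destruct (Rmult_integral _ _ h2); [contradiction|assumption]. }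
  assert (HX : (v - p) * L2 = d * L2 / 2 - w * dU) by (unfold d; lra).
  assert (Eb : w^2 * cr^2 = 3/4 * d^2 * L2^2).
  { assert (h : L2 * ((v-p)^2*L2 + 2*(v-p)*w*dU + w^2*F) =
      ((v-p)*L2)^2 + 2*((v-p)*L2)*w*dU + w^2*(L2*F)) by ring.
    rewrite HX, Hlag in h.
    assert (h2 : L2 * (d^2 * L2) = (d * L2 / 2 - w * dU) ^ 2 + 2 * (d * L2 / 2 - w * dU) * w * dU +
       w ^ 2 * (dU ^ 2 + cr ^ 2)) by (rewrite <- h, <- E2, <- E1; reflexivity).
    assert (h3 : (d * L2 / 2 - w * dU) ^ 2 + 2 * (d * L2 / 2 - w * dU) * w * dU +
       w ^ 2 * (dU ^ 2 + cr ^ 2) = d^2 * L2^2 / 4 + w^2 * cr^2) by field.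
    assert (h4 : L2 * (d^2 * L2) = d^2 * L2^2) by ring.
    lra. }
  set (K := Rabs cr).
  assert (HK : 0 < K) by (apply Rabs_pos_lt; exact Hcr).
  assert (HK2 : K * K = cr ^ 2) by (unfold K; rewrite <- Rabs_mult, Rabs_right by nra; ring).
  assert (HwK : w * K = sqrt 3 / 2 * Rabs d * L2).
  { apply sq_eq_nonneg.
    - nra.
    - pose proof s3pos; pose proof (Rabs_pos d); apply Rmult_le_pos; [apply Rmult_le_pos|]; lra.
    - replace (sqrt 3 / 2 * Rabs d * L2 * (sqrt 3 / 2 * Rabs d * L2)) with
        (sqrt 3 * sqrt 3 / 4 * (Rabs d * Rabs d) * L2^2) by field.
      rewrite s3sq, <- Rabs_mult, (Rabs_right (d*d)) by nra.
      replace (w * K * (w * K)) with (w^2 * (K * K)) by ring. rewrite HK2, Eb. ring. }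
  assert (I1 : sqrt 3 * Rabs d * dU <= K * (p + q)).
  { assert (h : 2 * K * (v * L2) = ((p+q) * K - sqrt 3 * Rabs d * dU) * L2).
    { replace (2 * K * (v * L2)) with (2 * K * ((v - p) * L2) + 2 * K * p * L2) by ring.
      rewrite HX. replace (2 * K * (d * L2 / 2 - w * dU)) with (K * d * L2 - 2 * (w * K) * dU) by field.
      rewrite HwK. unfold d. field. }
    assert (0 <= ((p+q) * K - sqrt 3 * Rabs d * dU) * L2) by (rewrite <- h; apply Rmult_le_pos; [lra| apply Rmult_le_pos; lra]).
    assert (0 <= (p+q) * K - sqrt 3 * Rabs d * dU).
    { destruct (Rle_lt_dec 0 ((p+q) * K - sqrt 3 * Rabs d * dU)); [assumption|nra]. }
    lra. }
  assert (I2 : sqrt 3 * Rabs d * (L2 - dU) <= K * (2 - p - q)).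
  { assert (h : 2 * K * ((1 - v - w) * L2) = ((2 - p - q) * K - sqrt 3 * Rabs d * (L2 - dU)) * L2).
    { replace (2 * K * ((1 - v - w) * L2)) with
        (2 * K * L2 - 2 * K * ((v - p) * L2) - 2 * K * p * L2 - 2 * (w * K) * L2) by ring.
      rewrite HX. replace (2 * K * (d * L2 / 2 - w * dU)) with (K * d * L2 - 2 * (w * K) * dU) by field.
      rewrite HwK. unfold d. field. }
    assert (0 <= ((2 - p - q) * K - sqrt 3 * Rabs d * (L2 - dU)) * L2) by (rewrite <- h; apply Rmult_le_pos; [lra| apply Rmult_le_pos; lra]).
    assert (0 <= (2 - p - q) * K - sqrt 3 * Rabs d * (L2 - dU)).
    { destruct (Rle_lt_dec 0 ((2 - p - q) * K - sqrt 3 * Rabs d * (L2 - dU))); [assumption|nra]. }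
    lra. }
  assert (I3 : Rabs d <= p + q /\ Rabs d <= 2 - p - q).
  { unfold d; destruct (Rcase_abs (q - p)) as [h|h];
      [rewrite Rabs_left by exact h | rewrite Rabs_right by exact h]; lra. }
  set (MU := Rmax K (sqrt 3 * dU)). set (MV := Rmax K (sqrt 3 * (L2 - dU))).
  assert (J1 : Rabs d * MU <= K * (p + q)).
  { unfold MU, Rmax; destruct (Rle_dec K (sqrt 3 * dU)); nra. }
  assert (J2 : Rabs d * MV <= K * (2 - p - q)).
  { unfold MV, Rmax; destruct (Rle_dec K (sqrt 3 * (L2 - dU))); nra. }
  assert (HM : K <= MU /\ K <= MV) by (split; apply Rmax_l).
  assert (Hs : sqrt (d ^ 2 * L2) = Rabs d * sqrt L2).
  { rewrite sqrt_mult; [|nra|lra]. rewrite <- sqrt_Rsqr_abs. unfold Rsqr. f_equal. f_equal. ring. }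
  rewrite Hs.
  pose proof (sqrt_pos L2).
  assert (h : 2 * K * sqrt L2 / (MU + MV) - Rabs d * sqrt L2 =
     sqrt L2 * (2 * K - Rabs d * (MU + MV)) / (MU + MV)) by (field; lra).
  assert (0 <= sqrt L2 * (2 * K - Rabs d * (MU + MV)) / (MU + MV)).
  { unfold Rdiv; apply Rmult_le_pos; [apply Rmult_le_pos; lra | apply Rlt_le, Rinv_0_lt_compat; lra]. }
  lra.
Qed.

Lemma wet_upper U V W P Q R0 : crs U V W <> 0 -> equilateral P Q R0 ->
  on_segment U V P -> on_segment U V Q -> triangle_subset P Q R0 U V W ->
  pdist P Q <= sopt U V W.
Proof.
  intros Hcr [Hpos [E1 E2]] [p [Hp [HP1 HP2]]] [q [Hq [HQ1 HQ2]]] Hsub.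
  assert (HR : in_triangle U V W R0).
  { apply Hsub. exists 0, 0, 1. repeat split; try lra. }
  destruct HR as [a0 [v [w [Ha0 [Hv [Hw [Hs [HR1 HR2]]]]]]]].
  apply pdist_sq_eq in E1. apply pdist_sq_eq in E2.
  unfold sopt. rewrite pdist_eq in *. rewrite (pdist_eq U V).
  destruct U as [u1 u2], V as [v1 v2], W as [w1 w2], P as [p1 p2], Q as [q1 q2],
    R0 as [r1 r2].
  unfold crs, dotp in *; cbn [fst snd] in *.
  assert (a0 = 1 - v - w) by lra. subst a0 p1 p2 q1 q2 r1 r2.
  set (e1 := v1 - u1). set (e2 := v2 - u2). set (f1 := w1 - u1). set (f2 := w2 - u2).
  set (L2 := e1 ^ 2 + e2 ^ 2). set (dU := e1 * f1 + e2 * f2).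
  set (F := f1 ^ 2 + f2 ^ 2). set (cr := e1 * f2 - e2 * f1).
  assert (Hlag : L2 * F = dU ^ 2 + cr ^ 2) by (unfold L2, dU, F, cr, e1, e2, f1, f2; ring).
  assert (EPQ : ((1 - p) * u1 + p * v1 - ((1 - q) * u1 + q * v1)) ^ 2 +
     ((1 - p) * u2 + p * v2 - ((1 - q) * u2 + q * v2)) ^ 2 = (q - p) ^ 2 * L2)
    by (unfold L2, e1, e2; ring).
  assert (EQR : ((1 - q) * u1 + q * v1 - ((1 - v - w) * u1 + v * v1 + w * w1)) ^ 2 +
     ((1 - q) * u2 + q * v2 - ((1 - v - w) * u2 + v * v2 + w * w2)) ^ 2 =
     (v - q) ^ 2 * L2 + 2 * (v - q) * w * dU + w ^ 2 * F)
    by (unfold L2, dU, F, e1, e2, f1, f2; ring).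
  assert (ERP : ((1 - v - w) * u1 + v * v1 + w * w1 - ((1 - p) * u1 + p * v1)) ^ 2 +
     ((1 - v - w) * u2 + v * v2 + w * w2 - ((1 - p) * u2 + p * v2)) ^ 2 =
     (v - p) ^ 2 * L2 + 2 * (v - p) * w * dU + w ^ 2 * F)
    by (unfold L2, dU, F, e1, e2, f1, f2; ring).
  assert (EUV : (u1 - v1) ^ 2 + (u2 - v2) ^ 2 = L2) by (unfold L2, e1, e2; ring).
  assert (EdV : (u1 - v1) * (w1 - v1) + (u2 - v2) * (w2 - v2) = L2 - dU)
    by (unfold L2, dU, F, e1, e2, f1, f2; ring).
  fold e1 e2 f1 f2 cr dU in Hcr |- *.
  rewrite EPQ, EQR in E1. rewrite EQR, ERP in E2. rewrite EPQ in Hpos |- *.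
  rewrite EUV, EdV.
  clearbody e1 e2 f1 f2 L2 dU F cr.
  apply (scalar_upper L2 dU F cr p q v w); auto.
Qed.


Lemma div_nonneg a b : 0 <= a -> 0 < b -> 0 <= a / b.
Proof. intros. unfold Rdiv. apply Rmult_le_pos; [lra|]. left; apply Rinv_0_lt_compat; lra. Qed.
Lemma div_le1 a b : a <= b -> 0 < b -> a / b <= 1.
Proof. intros. assert (1 - a/b = (b-a)/b) by (field; lra).
  assert (0 <= (b-a)/b) by (apply div_nonneg; lra). lra. Qed.

Lemma div_pos_aux a b : 0 < a -> 0 < b -> 0 < a / b.
Proof. intros. unfold Rdiv. apply Rmult_lt_0_compat; [lra|]. apply Rinv_0_lt_compat; lra. Qed.

Lemma convex_tri U V W P Q R0 :
  in_triangle U V W P -> in_triangle U V W Q -> in_triangle U V W R0 ->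
  triangle_subset P Q R0 U V W.
Proof.
  intros [a1 [b1 [c1 [? [? [? [? [HP1 HP2]]]]]]]] [a2 [b2 [c2 [? [? [? [? [HQ1 HQ2]]]]]]]]
         [a3 [b3 [c3 [? [? [? [? [HR1 HR2]]]]]]]] X [x [y [z [? [? [? [? [HX1 HX2]]]]]]]].
  exists (x*a1 + y*a2 + z*a3), (x*b1 + y*b2 + z*b3), (x*c1 + y*c2 + z*c3).
  repeat split.
  - nra.
  - nra.
  - nra.
  - replace (x * a1 + y * a2 + z * a3 + (x * b1 + y * b2 + z * b3) + (x * c1 + y * c2 + z * c3))
      with (x * (a1 + b1 + c1) + y * (a2 + b2 + c2) + z * (a3 + b3 + c3)) by ring.
    rewrite H2, H6, H10. lra.
  - rewrite HX1, HP1, HQ1, HR1. ring.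
  - rewrite HX2, HP2, HQ2, HR2. ring.
Qed.

Lemma wet_exists U V W : crs U V W <> 0 -> wedged_area U V W U V (eq_area (sopt U V W)).
Proof.
  intro Hcr.
  unfold sopt. rewrite (pdist_eq U V).
  destruct U as [u1 u2], V as [v1 v2], W as [w1 w2].
  unfold crs, dotp in *; cbn [fst snd] in *.
  set (e1 := v1 - u1) in *. set (e2 := v2 - u2) in *. set (f1 := w1 - u1) in *. set (f2 := w2 - u2) in *.
  assert (EUV : (u1 - v1) ^ 2 + (u2 - v2) ^ 2 = e1 ^ 2 + e2 ^ 2) by (unfold e1, e2; ring).
  assert (EdV : (u1 - v1) * (w1 - v1) + (u2 - v2) * (w2 - v2) = (e1 ^ 2 + e2 ^ 2) - (e1 * f1 + e2 * f2))
    by (unfold e1, e2, f1, f2; ring).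
  rewrite EUV, EdV.
  set (L2 := e1 ^ 2 + e2 ^ 2). set (dU := e1 * f1 + e2 * f2).
  set (F := f1 ^ 2 + f2 ^ 2). set (cr := e1 * f2 - e2 * f1) in *.
  assert (Hlag : L2 * F = dU ^ 2 + cr ^ 2) by (unfold L2, dU, F, cr; ring).
  assert (HL2 : 0 < L2).
  { unfold L2. destruct (Rle_lt_dec (e1 ^ 2 + e2 ^ 2) 0) as [h|h]; [|exact h].
    exfalso. assert (e1 = 0) by nra. assert (e2 = 0) by nra. apply Hcr. unfold cr.
    rewrite H, H0. ring. }
  set (K := Rabs cr).
  assert (HK : 0 < K) by (apply Rabs_pos_lt; exact Hcr).
  assert (HK2 : cr ^ 2 = K ^ 2) by (unfold K; rewrite pow2_abs; reflexivity).
  assert (HF : F = (dU ^ 2 + K ^ 2) / L2) by (rewrite <- HK2, <- Hlag; field; lra).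
  pose proof s3sq as Hr2. pose proof s3pos as Hr.
  set (r := sqrt 3) in *.
  set (MU := Rmax K (r * dU)). set (MV := Rmax K (r * (L2 - dU))).
  assert (HMU : K <= MU) by apply Rmax_l. assert (HMU' : r * dU <= MU) by apply Rmax_r.
  assert (HMV : K <= MV) by apply Rmax_l. assert (HMV' : r * (L2 - dU) <= MV) by apply Rmax_r.
  set (D := MU + MV).
  assert (HD : 0 < D) by (unfold D; lra).
  set (p := (MU - K) / D). set (q := (MU + K) / D).
  set (v := (MU - r * dU) / D). set (w := r * L2 / D).
  assert (Hp : 0 <= p <= 1).
  { unfold p; split; [apply div_nonneg|apply div_le1]; unfold D; lra. }
  assert (Hq : 0 <= q <= 1).
  { unfold q; split; [apply div_nonneg|apply div_le1]; unfold D; lra. }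
  assert (Hv : 0 <= v) by (unfold v; apply div_nonneg; lra).
  assert (Hw : 0 <= w) by (unfold w; apply div_nonneg; nra).
  assert (Hvw : 0 <= 1 - v - w).
  { assert (E : 1 - v - w = (MV - r * (L2 - dU)) / D) by (unfold v, w, D; field; lra).
    rewrite E; apply div_nonneg; lra. }
  assert (Hqp : q - p = 2 * K / D) by (unfold q, p; field; lra).
  assert (HPQ : (q - p) ^ 2 * L2 = 4 * K ^ 2 * L2 / D ^ 2) by (rewrite Hqp; field; lra).
  assert (HQR : (v - q) ^ 2 * L2 + 2 * (v - q) * w * dU + w ^ 2 * F = (q - p) ^ 2 * L2).
  { rewrite HPQ, HF.
    assert (E : (v - q) ^ 2 * L2 + 2 * (v - q) * w * dU + w ^ 2 * ((dU ^ 2 + K ^ 2) / L2)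
      - 4 * K ^ 2 * L2 / D ^ 2 = L2 * K ^ 2 * (r * r - 3) / D ^ 2)
      by (unfold v, q, w; field; lra).
    rewrite Hr2 in E. lra. }
  assert (HRP : (v - p) ^ 2 * L2 + 2 * (v - p) * w * dU + w ^ 2 * F = (q - p) ^ 2 * L2).
  { rewrite HPQ, HF.
    assert (E : (v - p) ^ 2 * L2 + 2 * (v - p) * w * dU + w ^ 2 * ((dU ^ 2 + K ^ 2) / L2)
      - 4 * K ^ 2 * L2 / D ^ 2 = L2 * K ^ 2 * (r * r - 3) / D ^ 2)
      by (unfold v, p, w; field; lra).
    rewrite Hr2 in E. lra. }
  exists ((1 - p) * u1 + p * v1, (1 - p) * u2 + p * v2),
         ((1 - q) * u1 + q * v1, (1 - q) * u2 + q * v2),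
         ((1 - v - w) * u1 + v * v1 + w * w1, (1 - v - w) * u2 + v * v2 + w * w2).
  unfold equilateral; rewrite !pdist_eq; cbn [fst snd].
  assert (EPQ : ((1 - p) * u1 + p * v1 - ((1 - q) * u1 + q * v1)) ^ 2 +
     ((1 - p) * u2 + p * v2 - ((1 - q) * u2 + q * v2)) ^ 2 = (q - p) ^ 2 * L2)
    by (unfold L2, e1, e2; ring).
  assert (EQR : ((1 - q) * u1 + q * v1 - ((1 - v - w) * u1 + v * v1 + w * w1)) ^ 2 +
     ((1 - q) * u2 + q * v2 - ((1 - v - w) * u2 + v * v2 + w * w2)) ^ 2 =
     (v - q) ^ 2 * L2 + 2 * (v - q) * w * dU + w ^ 2 * F)
    by (unfold L2, dU, F, e1, e2, f1, f2; ring).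
  assert (ERP : ((1 - v - w) * u1 + v * v1 + w * w1 - ((1 - p) * u1 + p * v1)) ^ 2 +
     ((1 - v - w) * u2 + v * v2 + w * w2 - ((1 - p) * u2 + p * v2)) ^ 2 =
     (v - p) ^ 2 * L2 + 2 * (v - p) * w * dU + w ^ 2 * F)
    by (unfold L2, dU, F, e1, e2, f1, f2; ring).
  rewrite EPQ, EQR, ERP, HQR, HRP.
  assert (Hs : sqrt ((q - p) ^ 2 * L2) = 2 * K * sqrt L2 / D).
  { rewrite sqrt_mult; [|nra|lra]. rewrite sqrt_pow2 by (rewrite Hqp; apply div_nonneg; lra).
    rewrite Hqp. field. lra. }
  split; [|split; [|split; [|split]]].
  - rewrite Hs. repeat split; try reflexivity.
    apply div_pos_aux; [|exact HD].
    assert (0 < sqrt L2) by (apply sqrt_lt_R0; exact HL2). nra.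
  - exists p. repeat split; try lra.
  - exists q. repeat split; try lra.
  - apply convex_tri.
    + exists (1 - p), p, 0. repeat split; cbn [fst snd]; try lra; ring.
    + exists (1 - q), q, 0. repeat split; cbn [fst snd]; try lra; ring.
    + exists (1 - v - w), v, w. repeat split; cbn [fst snd]; try lra.
  - rewrite Hs. reflexivity.
Qed.

Lemma eq_area_le s1 s2 : 0 <= s1 <= s2 -> eq_area s1 <= eq_area s2.
Proof. intros. unfold eq_area. pose proof s3pos. assert (s1^2 <= s2^2) by nra. nra. Qed.
Lemma eq_area_lt s1 s2 : 0 <= s1 < s2 -> eq_area s1 < eq_area s2.
Proof. intros. unfold eq_area. pose proof s3pos. assert (s1^2 < s2^2) by nra. nra. Qed.

Lemma wet_general U V W : crs U V W <> 0 -> is_WET_area U V W U V (eq_area (sopt U V W)).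
Proof.
  intro Hcr. split; [apply wet_exists; exact Hcr|].
  intros w [P [Q [R0 [Heq [HP [HQ [Hs Hw]]]]]]]. rewrite Hw.
  apply eq_area_le. split; [apply sqrt_pos|]. apply (wet_upper U V W P Q R0); assumption.
Qed.

Lemma in_tri_rot A B C X : in_triangle A B C X -> in_triangle B C A X.
Proof.
  intros [u [v [w [? [? [? [? [? ?]]]]]]]]. exists v, w, u. repeat split; try lra.
Qed.

Lemma wedged_rot A B C U V w : wedged_area B C A U V w -> wedged_area A B C U V w.
Proof.
  intros [P [Q [R0 [? [? [? [Hs ?]]]]]]]. exists P, Q, R0. split; [|split; [|split; [|split]]]; try assumption.
  intros X HX. apply in_tri_rot, in_tri_rot, Hs, HX.
Qed.
Lemma wedged_rot' A B C U V w : wedged_area A B C U V w -> wedged_area B C A U V w.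
Proof.
  intros [P [Q [R0 [? [? [? [Hs ?]]]]]]]. exists P, Q, R0. split; [|split; [|split; [|split]]]; try assumption.
  intros X HX. apply in_tri_rot, Hs, HX.
Qed.
Lemma wet_rot A B C U V W0 : is_WET_area B C A U V W0 -> is_WET_area A B C U V W0.
Proof.
  intros [H1 H2]. split; [apply wedged_rot; exact H1|].
  intros w Hw. apply H2, wedged_rot', Hw.
Qed.

Lemma final_alg (a b c K dA dB dC al be : R) :
  0 < a -> 0 < b -> 0 < c -> 0 < K -> a > b ->
  dA + dB = c ^ 2 -> c ^ 2 * dC = K ^ 2 - dA * dB ->
  cos al = dA / (b * c) -> sin al = K / (b * c) ->
  cos be = dB / (a * c) -> sin be = K / (a * c) ->
  let Wa := eq_area (2 * K * a / (Rmax K (sqrt 3 * dB) + Rmax K (sqrt 3 * dC))) in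
  let Wb := eq_area (2 * K * b / (Rmax K (sqrt 3 * dC) + Rmax K (sqrt 3 * dA))) in
  let Wc := eq_area (2 * K * c / (Rmax K (sqrt 3 * dA) + Rmax K (sqrt 3 * dB))) in
    ((deg 60 < be /\ be < deg 80 /\ deg 80 < al /\ al < deg 90 /\
      al / 2 + be < deg 120 /\ al + be / 2 >= deg 120) ->
       (Wb < Wa /\ Wb < Wc) /\
       (al + be / 2 = deg 120 -> Wa = Wc /\ Wb < Wa) /\
       (al + be / 2 > deg 120 -> Wc < Wa /\ Wb < Wa)) /\
    ((deg 75 < be /\ be < deg 90 /\ deg 80 < al /\ al < deg 90 /\
      al / 2 + be >= deg 120) ->
       (Wb < Wa /\ Wc < Wa) /\
       (al / 2 + be > deg 120 -> Wc < Wb /\ Wc < Wa) /\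
       (al / 2 + be = deg 120 -> Wb = Wc /\ Wc < Wa)).
Proof.
  intros Ha Hb Hc HK Hab HdAB HdC Hca Hsa Hcb Hsb Wa Wb Wc.
  pose proof s3pos as Hr. pose proof s3sq as Hr2. set (r := sqrt 3) in *.
  assert (HS : sin (al + be) = K / (a * b)).
  { rewrite sin_plus, Hsa, Hcb, Hca, Hsb.
    replace dB with (c ^ 2 - dA) by lra. field. lra. }
  assert (HC : cos (al + be) = - dC / (a * b)).
  { rewrite cos_plus, Hsa, Hcb, Hca, Hsb.
    assert (E : dA * dB - K * K = - (c ^ 2 * dC)) by (rewrite HdC; ring).
    replace (dA / (b * c) * (dB / (a * c)) - K / (b * c) * (K / (a * c)))
      with ((dA * dB - K * K) / (a * b * c ^ 2)) by (field; lra).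
    rewrite E. field. lra. }
  assert (Hsx : sin (4 * PI / 3 - (al + be)) = (K + r * dC) / (2 * (a * b))).
  { rewrite sin43, HS, HC. fold r. field. lra. }
  assert (KEY : 0 < sin (al - PI/3) -> 0 < sin (be - PI/3) -> 0 < sin (al + be - 2*PI/3) ->
     let X := K + r * dC in 0 < X /\
     Wa = eq_area (2 * K * a / X) /\ Wb = eq_area (2 * K * b / X) /\ Wc = eq_area c /\
     2 * K * a / X - c = 2 * a * b * c * (sin al - sin (4 * PI / 3 - (al + be))) / X /\
     2 * K * b / X - c = 2 * a * b * c * (sin be - sin (4 * PI / 3 - (al + be))) / X /\
     2 * K * a / X - 2 * K * b / X = 2 * K * (a - b) / X).
  { intros S1 S2 S3 X.
    rewrite sinm13, Hsa, Hca in S1. rewrite sinm13, Hsb, Hcb in S2.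
    rewrite sinm23, HS, HC in S3. fold r in S1, S2, S3.
    assert (F1 : r * dA < K).
    { assert (E : K - r * dA = 2 * (b * c) * (K / (b * c) / 2 - r / 2 * (dA / (b * c)))) by (field; lra).
      assert (0 < 2 * (b * c) * (K / (b * c) / 2 - r / 2 * (dA / (b * c)))) by
        (apply Rmult_lt_0_compat; nra).
      lra. }
    assert (F2 : r * dB < K).
    { assert (E : K - r * dB = 2 * (a * c) * (K / (a * c) / 2 - r / 2 * (dB / (a * c)))) by (field; lra).
      assert (0 < 2 * (a * c) * (K / (a * c) / 2 - r / 2 * (dB / (a * c)))) by
        (apply Rmult_lt_0_compat; nra).
      lra. }
    assert (F3 : K < r * dC).
    { assert (E : r * dC - K = 2 * (a * b) * (- (K / (a * b)) / 2 - r / 2 * (- dC / (a * b)))) by (field; lra).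
      assert (0 < 2 * (a * b) * (- (K / (a * b)) / 2 - r / 2 * (- dC / (a * b)))) by
        (apply Rmult_lt_0_compat; nra).
      lra. }
    assert (HX : 0 < X) by (unfold X; lra).
    unfold Wa, Wb, Wc.
    rewrite (Rmax_left K (r * dA)) by lra. rewrite (Rmax_left K (r * dB)) by lra.
    rewrite (Rmax_right K (r * dC)) by lra.
    split; [exact HX|]. split; [f_equal; unfold X; field; lra|].
    split; [f_equal; unfold X; field; lra|]. split; [f_equal; field; lra|].
    rewrite Hsa, Hsb, Hsx. fold X.
    split; [field; lra|]. split; [field; lra|]. field; lra. }
  assert (Hpos : forall X, 0 < X -> 0 < 2 * a * b * c / X).
  { intros. apply div_pos_aux; [|lra]. repeat apply Rmult_lt_0_compat; lra. }
  assert (Hs0 : forall X, 0 < X -> 0 <= c /\ 0 <= 2 * K * b / X /\ 0 <= 2 * K * a / X).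
  { intros X HX. split; [lra|]. split; apply div_nonneg; nra. }
  split.
  - intros [h1 [h2 [h3 [h4 [h5 h6]]]]].
    destruct (trig_i al be h1 h2 h3 h4 h5 h6) as [S1 [S2 [S3 [T1 [T2 [T3 T4]]]]]].
    destruct (KEY S1 S2 S3) as [HX [EWa [EWb [EWc [D1 [D2 D3]]]]]].
    set (X := K + r * dC) in *.
    rewrite EWa, EWb, EWc.
    destruct (Hs0 X HX) as [Z1 [Z2 Z3]].
    pose proof (Hpos X HX) as HP.
    assert (Lba : 2 * K * b / X < 2 * K * a / X).
    { assert (0 < 2 * K * (a - b) / X) by (apply div_pos_aux; nra). lra. }
    assert (Lbc : 2 * K * b / X < c).
    { assert (2 * a * b * c * (sin be - sin (4 * PI / 3 - (al + be))) / X < 0); [|lra].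
      replace (2 * a * b * c * (sin be - sin (4 * PI / 3 - (al + be))) / X) with
        (2 * a * b * c / X * (sin be - sin (4 * PI / 3 - (al + be)))) by (field; lra). nra. }
    split; [split; apply eq_area_lt; lra|]. split.
    + intro E. specialize (T3 E).
      split; [|apply eq_area_lt; lra]. f_equal.
      assert (2 * a * b * c * (sin al - sin (4 * PI / 3 - (al + be))) / X = 0)
        by (rewrite T3; unfold Rminus; rewrite Rplus_opp_r; field; lra). lra.
    + intro E. specialize (T4 E). split; [|apply eq_area_lt; lra].
      apply eq_area_lt. split; [lra|].
      assert (0 < 2 * a * b * c * (sin al - sin (4 * PI / 3 - (al + be))) / X); [|lra].
      replace (2 * a * b * c * (sin al - sin (4 * PI / 3 - (al + be))) / X) with
        (2 * a * b * c / X * (sin al - sin (4 * PI / 3 - (al + be)))) by (field; lra). nra.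
  - intros [h1 [h2 [h3 [h4 h5]]]].
    assert (Hsab : sin be < sin al).
    { rewrite Hsa, Hsb. apply Rmult_lt_compat_l; [lra|]. apply Rinv_lt_contravar; [apply Rmult_lt_0_compat; apply Rmult_lt_0_compat; lra | apply Rmult_lt_compat_r; lra]. }
    destruct (trig_ii al be h1 h2 h3 h4 h5 Hsab) as [S1 [S2 [S3 [T1 [T2 [T3 T4]]]]]].
    destruct (KEY S1 S2 S3) as [HX [EWa [EWb [EWc [D1 [D2 D3]]]]]].
    set (X := K + r * dC) in *.
    rewrite EWa, EWb, EWc.
    destruct (Hs0 X HX) as [Z1 [Z2 Z3]].
    pose proof (Hpos X HX) as HP.
    assert (Lba : 2 * K * b / X < 2 * K * a / X).
    { assert (0 < 2 * K * (a - b) / X) by (apply div_pos_aux; nra). lra. }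
    assert (Lca : c < 2 * K * a / X).
    { assert (0 < 2 * a * b * c * (sin al - sin (4 * PI / 3 - (al + be))) / X); [|lra].
      replace (2 * a * b * c * (sin al - sin (4 * PI / 3 - (al + be))) / X) with
        (2 * a * b * c / X * (sin al - sin (4 * PI / 3 - (al + be)))) by (field; lra). nra. }
    split; [split; apply eq_area_lt; lra|]. split.
    + intro E. specialize (T4 E). split; [|apply eq_area_lt; lra].
      apply eq_area_lt. split; [lra|].
      assert (0 < 2 * a * b * c * (sin be - sin (4 * PI / 3 - (al + be))) / X); [|lra].
      replace (2 * a * b * c * (sin be - sin (4 * PI / 3 - (al + be))) / X) with
        (2 * a * b * c / X * (sin be - sin (4 * PI / 3 - (al + be)))) by (field; lra). nra.
    + intro E. specialize (T3 E).
      split; [|apply eq_area_lt; lra]. f_equal.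
      assert (2 * a * b * c * (sin be - sin (4 * PI / 3 - (al + be))) / X = 0)
        by (rewrite T3; unfold Rminus; rewrite Rplus_opp_r; field; lra). lra.
Qed.

Lemma acos_link d n K : 0 < n -> 0 < K -> d ^ 2 + K ^ 2 = n ^ 2 ->
  cos (acos (d / n)) = d / n /\ sin (acos (d / n)) = K / n.
Proof.
  intros Hn HK E.
  assert (Hd : - n <= d <= n) by (split; nra).
  assert (Hb : -1 <= d / n <= 1).
  { split.
    - assert (0 <= (d + n) / n) by (apply div_nonneg; lra).
      assert ((d + n) / n = d / n + 1) by (field; lra). lra.
    - assert (0 <= (n - d) / n) by (apply div_nonneg; lra).
      assert ((n - d) / n = 1 - d / n) by (field; lra). lra. }
  split; [apply cos_acos; exact Hb|].
  rewrite sin_acos by exact Hb.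
  assert (E2 : 1 - (d/n)² = (K/n)²).
  { unfold Rsqr. replace (K/n*(K/n)) with (K^2/n^2) by (field; lra).
    replace (1 - d/n*(d/n)) with ((n^2-d^2)/n^2) by (field; lra). f_equal. lra. }
  rewrite E2.
  apply sqrt_Rsqr. apply div_nonneg; lra.
Qed.

Lemma pdist_sq U V : pdist U V ^ 2 = (fst U - fst V) ^ 2 + (snd U - snd V) ^ 2.
Proof. unfold pdist. apply pow2_sqrt. apply sqr_nonneg2. Qed.

Lemma pdist_sym U V : pdist U V = pdist V U.
Proof. unfold pdist. f_equal. ring. Qed.

Lemma pdist_pos U V W : crs U V W <> 0 -> 0 < pdist U V.
Proof.
  intro H. unfold pdist. apply sqrt_lt_R0.
  destruct (Rle_lt_dec ((fst U - fst V) ^ 2 + (snd U - snd V) ^ 2) 0) as [h|h]; [|exact h].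
  exfalso. apply H. unfold crs.
  pose proof (pow2_ge_0 (fst U - fst V)). pose proof (pow2_ge_0 (snd U - snd V)).
  assert (fst U - fst V = 0) by (apply Rsqr_0_uniq; unfold Rsqr; lra).
  assert (snd U - snd V = 0) by (apply Rsqr_0_uniq; unfold Rsqr; lra).
  replace (fst V - fst U) with 0 by lra. replace (snd V - snd U) with 0 by lra. ring.
Qed.

Theorem mainTheorem3 (A B C : pt) :
  nondegenerate A B C ->
  let a := pdist B C in let b := pdist C A in let c := pdist A B in
  let al := angle A B C in let be := angle B C A in
  a > b -> b > c ->
  exists Wa Wb Wc : R,
    is_WET_area A B C B C Wa /\ is_WET_area A B C C A Wb /\
    is_WET_area A B C A B Wc /\
    ((deg 60 < be /\ be < deg 80 /\ deg 80 < al /\ al < deg 90 /\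
      al / 2 + be < deg 120 /\ al + be / 2 >= deg 120) ->
       (Wb < Wa /\ Wb < Wc) /\
       (al + be / 2 = deg 120 -> Wa = Wc /\ Wb < Wa) /\
       (al + be / 2 > deg 120 -> Wc < Wa /\ Wb < Wa)) /\
    ((deg 75 < be /\ be < deg 90 /\ deg 80 < al /\ al < deg 90 /\
      al / 2 + be >= deg 120) ->
       (Wb < Wa /\ Wc < Wa) /\
       (al / 2 + be > deg 120 -> Wc < Wb /\ Wc < Wa) /\
       (al / 2 + be = deg 120 -> Wb = Wc /\ Wc < Wa)).
Proof.
  intros Hnd a b c al be Hab Hbc.
  assert (H0 : crs A B C <> 0) by exact Hnd.
  assert (E1 : crs B C A = crs A B C) by (unfold crs; ring).
  assert (E2 : crs C A B = crs A B C) by (unfold crs; ring).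
  assert (H1 : crs B C A <> 0) by (rewrite E1; exact H0).
  assert (H2 : crs C A B <> 0) by (rewrite E2; exact H0).
  exists (eq_area (sopt B C A)), (eq_area (sopt C A B)), (eq_area (sopt A B C)).
  split; [apply wet_rot, wet_general, H1|].
  split; [apply wet_rot, wet_rot, wet_general, H2|].
  split; [apply wet_general, H0|].
  assert (E3 : dotp C B A = dotp C A B) by (unfold dotp; ring).
  assert (E4 : dotp A C B = dotp A B C) by (unfold dotp; ring).
  assert (E5 : dotp B A C = dotp B C A) by (unfold dotp; ring).
  unfold sopt. rewrite E1, E2, E3, E4, E5.
  assert (Ha : 0 < a) by (apply (pdist_pos B C A); exact H1).
  assert (Hb : 0 < b) by (apply (pdist_pos C A B); exact H2).
  assert (Hc : 0 < c) by (apply (pdist_pos A B C); exact H0).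
  set (K := Rabs (crs A B C)).
  assert (HK : 0 < K) by (apply Rabs_pos_lt; exact H0).
  assert (HK2 : K ^ 2 = crs A B C ^ 2) by (unfold K; apply pow2_abs).
  assert (Hsa : a ^ 2 = (fst B - fst C) ^ 2 + (snd B - snd C) ^ 2) by apply pdist_sq.
  assert (Hsb : b ^ 2 = (fst C - fst A) ^ 2 + (snd C - snd A) ^ 2) by apply pdist_sq.
  assert (Hsc : c ^ 2 = (fst A - fst B) ^ 2 + (snd A - snd B) ^ 2) by apply pdist_sq.
  assert (HAC : pdist A C = b) by apply pdist_sym.
  assert (HBA : pdist B A = c) by apply pdist_sym.
  assert (Hal : al = acos (dotp A B C / (c * b))) by (unfold al, angle; rewrite HAC; reflexivity).
  assert (Hbe : be = acos (dotp B C A / (a * c))) by (unfold be, angle; rewrite HBA; reflexivity).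
  assert (L1 : dotp A B C ^ 2 + K ^ 2 = (c * b) ^ 2).
  { rewrite HK2. replace ((c * b) ^ 2) with (c ^ 2 * b ^ 2) by ring. rewrite Hsc, Hsb.
    unfold dotp, crs; ring. }
  assert (L2 : dotp B C A ^ 2 + K ^ 2 = (a * c) ^ 2).
  { rewrite HK2. replace ((a * c) ^ 2) with (a ^ 2 * c ^ 2) by ring. rewrite Hsa, Hsc.
    unfold dotp, crs; ring. }
  destruct (acos_link (dotp A B C) (c * b) K) as [Ca Sa]; [nra|exact HK|exact L1|].
  destruct (acos_link (dotp B C A) (a * c) K) as [Cb Sb]; [nra|exact HK|exact L2|].
  rewrite <- Hal in Ca, Sa. rewrite <- Hbe in Cb, Sb.
  rewrite (Rmult_comm c b) in Ca, Sa.
  apply (final_alg a b c K (dotp A B C) (dotp B C A) (dotp C A B) al be); try assumption.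
  - rewrite Hsc. unfold dotp; ring.
  - rewrite HK2, Hsc. unfold dotp, crs; ring.
Qed.
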